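(* Among all $3\times3$ unimodular zerofree matrices $M$, the minimum of $\|(M\;M^{-1})\|$ is $3$. There are exactly $576$ minimizers, and all of them are equivalent to $$M=\begin{pmatrix}1&2&2\\2&1&2\\2&2&3\end{pmatrix},\qquad M^{-1}=\begin{pmatrix}1&2&-2\\2&1&-2\\-2&-2&3\end{pmatrix}.$$
   Context: A square integer matrix is unimodular if its determinant is $\pm1$. An invertible matrix $Z$ is zerofree if none of the entries of $Z$ and none of the entries of $Z^{-1}$ is zero. For a matrix $A$, $\|A\|$ denotes the maximum of the absolute values of its entries. $(M\;M^{-1})$ denotes the $n\times 2n$ matrix obtained by concatenating $M$ and $M^{-1}$ side by side. Two $n\times n$ matrices $Z,Z'$ are equivalent if $Z'=PZQ$ for some $n\times n$ signed permutation matrices $P,Q$ (permutation matrices whose nonzero entries may be $\pm1$). *)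

(* Defs.v *)
From mathcomp Require Import all_boot all_order all_algebra all_fingroup.
Set Implicit Arguments. Unset Strict Implicit. Unset Printing Implicit Defensive.
Import Order.TTheory GRing.Theory Num.Theory.
Local Open Scope ring_scope.

Definition unimodular (n : nat) (M : 'M[int]_n) : Prop :=
  \det M = 1 \/ \det M = -1.

Definition zerofree (n : nat) (M : 'M[int]_n) : Prop :=
  M \in unitmx /\
  (forall i j, M i j != 0) /\ (forall i j, invmx M i j != 0).

Definition mxnorm (m n : nat) (A : 'M[int]_(m, n)) : nat :=
  \max_(i < m) \max_(j < n) `|A i j|%N.

Definition pairnorm (n : nat) (M : 'M[int]_n) : nat :=
  mxnorm (row_mx M (invmx M)).

Definition signed_perm_mx (n : nat) (P : 'M[int]_n) : Prop :=
  exists (s : 'S_n) (d : 'I_n -> int),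
    (forall i, d i = 1 \/ d i = -1) /\
    P = \matrix_(i, j) (d i * (s i == j)%:R).

Definition mx_equiv (n : nat) (Z Z' : 'M[int]_n) : Prop :=
  exists P Q : 'M[int]_n,
    signed_perm_mx P /\ signed_perm_mx Q /\ Z' = P *m Z *m Q.

Definition M0 : 'M[int]_3 :=
  \matrix_(i < 3, j < 3)
    (if (i : nat) == 2%N then (if (j : nat) == 2%N then 3 else 2)
     else if (i : nat) == j then 1 else 2).

(* Main.v *)
Require Import Defs.
From mathcomp Require Import all_boot all_order all_algebra all_fingroup.
From mathcomp Require Import ring.
Import Order.TTheory GRing.Theory Num.Theory.
Local Open Scope ring_scope.

Definition r3 := (int * int * int)%type.
Definition t9 := (r3 * r3 * r3)%type.
Definition rowE (r : r3) (j : nat) : int :=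
  let '(a,b,c) := r in if j == 0%N then a else if j == 1%N then b else c.
Definition ent (x : t9) (i j : nat) : int :=
  let '(r1,r2,r3) := x in rowE (if i == 0%N then r1 else if i == 1%N then r2 else r3) j.
Definition mk (x : t9) : 'M[int]_3 := \matrix_(i < 3, j < 3) ent x i j.
Definition cross (u v : r3) : r3 :=
  let '(a,b,c) := u in let '(d,e,f) := v in (b*f - c*e, c*d - a*f, a*e - b*d).
Definition dot (u v : r3) : int :=
  let '(a,b,c) := u in let '(d,e,f) := v in a*d+b*e+c*f.
Definition det3 (x : t9) : int := let '(r1,r2,r3) := x in dot r1 (cross r2 r3).

Lemma det_mk x : \det (mk x) = det3 x.
Proof.
case: x => [[[[a b] c] [[d e] f]] [[g h] i]].
rewrite (expand_det_row _ 0) !big_ord_recr big_ord0 /= /cofactor.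
rewrite !(expand_det_row _ 0) !big_ord_recr big_ord0 /= /cofactor.
rewrite !big_ord0 !det_mx11 !mxE /=.
ring.
Qed.
Definition tr9 (x : t9) : t9 :=
  let '((a,b,c),(d,e,f),(g,h,i)) := x in ((a,d,g),(b,e,h),(c,f,i)).
Definition adjx (x : t9) : t9 :=
  let '(r1,r2,r3) := x in tr9 (cross r2 r3, cross r3 r1, cross r1 r2).

Lemma mul_mk_adj x : mk x *m mk (adjx x) = (det3 x)%:M.
Proof.
case: x => [[[[a b] c] [[d e] f]] [[g h] i]].
apply/matrixP => p q; rewrite !mxE !big_ord_recr big_ord0 /= !mxE /=.
case: p => [[|[|[|//]]] ?]; case: q => [[|[|[|//]]] ?]; rewrite /=; ring.
Qed.

Definition unim (x : t9) : bool := (det3 x == 1) || (det3 x == -1).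

Lemma inv_mkE x : unim x -> forall i j, invmx (mk x) i j = det3 x * mk (adjx x) i j.
Proof.
move=> u.
have Hd : det3 x * det3 x = 1 by case/orP: u => /eqP ->; rewrite ?mulr1 ?mulrNN ?mulr1.
have U : mk x \in unitmx by rewrite unitmxE det_mk; case/orP: u => /eqP ->; rewrite ?unitr1 ?unitrN1.
have E : mk x *m (det3 x *: mk (adjx x)) = 1%:M by rewrite -scalemxAr mul_mk_adj scale_scalar_mx Hd.
have -> : invmx (mk x) = det3 x *: mk (adjx x) by rewrite -[invmx _]mulmx1 -E mulmxA mulVmx // mul1mx.
by move=> i j; rewrite mxE.
Qed.

Lemma unit_mk x : unim x -> mk x \in unitmx.
Proof. by move=> u; rewrite unitmxE det_mk; case/orP: u => /eqP ->; rewrite ?unitr1 ?unitrN1. Qed.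

Lemma pairnorm_leP (M : 'M[int]_3) k : (pairnorm M <= k)%N <->
  (forall i j, (`|M i j| <= k)%N) /\ (forall i j, (`|invmx M i j| <= k)%N).
Proof.
rewrite /pairnorm /mxnorm; split.
  move/bigmax_leqP => H; split => i j; have/bigmax_leqP := H i isT => H2.
    by have := H2 (lshift 3 j) isT; rewrite row_mxEl.
  by have := H2 (rshift 3 j) isT; rewrite row_mxEr.
case=> H1 H2; apply/bigmax_leqP => i _; apply/bigmax_leqP => j _.
by case: (split_ordP j) => j' ->; rewrite ?row_mxEl ?row_mxEr.
Qed.

Definition ents (x : t9) : seq int :=
  let '((a,b,c),(d,e,f),(g,h,i)) := x in [:: a;b;c;d;e;f;g;h;i].

Lemma allmkP (P : pred int) x : reflect (forall i j, P (mk x i j)) (all P (ents x)).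
Proof.
case: x => [[[[a b] c] [[d e] f]] [[g h] i]].
apply: (iffP idP).
  move=> /allP H [[|[|[|//]]] ?] [[|[|[|//]]] ?]; rewrite mxE /=; apply: H;
  by rewrite !inE eqxx ?orbT.
move=> H.
have hh := fun p q (Hp : (p < 3)%N) (Hq : (q < 3)%N) => H (Ordinal Hp) (Ordinal Hq).
move: (hh 0 0 isT isT)%N (hh 0 1 isT isT)%N (hh 0 2 isT isT)%N (hh 1 0 isT isT)%N
  (hh 1 1 isT isT)%N (hh 1 2 isT isT)%N (hh 2 0 isT isT)%N (hh 2 1 isT isT)%N (hh 2 2 isT isT)%N.
by rewrite !mxE /= => -> -> -> -> -> -> -> -> ->.
Qed.

Definition pcheck (k : nat) (v : int) : bool := (v != 0) && (absz v <= k)%N.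
Definition okb (k : nat) (x : t9) : bool :=
  [&& unim x, all (pcheck k) (ents x) & all (pcheck k) (ents (adjx x))].

Lemma unimP x : reflect (unimodular (mk x)) (unim x).
Proof. by rewrite /unimodular det_mk; apply: (iffP orP) => -[] /eqP; auto. Qed.

Lemma pcheckM k x v (u : unim x) : pcheck k (det3 x * v) = pcheck k v.
Proof.
by move: u; case/orP=> /eqP ->; rewrite /pcheck ?mul1r // mulN1r oppr_eq0 abszN.
Qed.

Lemma okP k x : reflect
  (unimodular (mk x) /\ zerofree (mk x) /\ (pairnorm (mk x) <= k)%N) (okb k x).
Proof.
apply: (iffP and3P).
  case=> u /allmkP H1 /allmkP H2; split; first exact/unimP.
  have H3 i j : pcheck k (invmx (mk x) i j) by rewrite inv_mkE // pcheckM.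
  split; first split; [exact: unit_mk| split|].
  - by move=> i j; case/andP: (H1 i j).
  - by move=> i j; case/andP: (H3 i j).
  - apply/pairnorm_leP; split=> i j; [by case/andP: (H1 i j)|by case/andP: (H3 i j)].
case=> /unimP u [[U [Z1 Z2]] /pairnorm_leP [B1 B2]]; split => //.
  by apply/allmkP => i j; rewrite /pcheck Z1 B1.
apply/allmkP => i j; rewrite -(pcheckM _ _ _ u) -inv_mkE //.
by rewrite /pcheck Z2 B2.
Qed.


Definition V : seq int := [:: -3; -2; -1; 1; 2; 3].
Definition rows : seq r3 := [seq (p, c) | p <- [seq (a, b) | a <- V, b <- V], c <- V].
Definition cok (c : r3) : bool := let '(a,b,e) := c in all (pcheck 3) [:: a; b; e].
Definition pairs : seq (r3 * r3) :=
  [seq (r1, r2) | r1 <- rows, r2 <- [seq r <- rows | cok (cross r1 r)]].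
Definition cands : seq t9 := [seq (p, r) | p <- pairs, r <- rows].
Definition found : seq t9 := [seq x <- cands | okb 3 x].

Definition negr (r : r3) : r3 := let '(a,b,c) := r in (-a,-b,-c).
Definition rgen (k : nat) (x : t9) : t9 :=
  let '(r1,r2,r3) := x in
  match k with
  | 0 => (r2,r1,r3) | 1 => (r1,r3,r2) | 2 => (negr r1,r2,r3) | 3 => (r1, negr r2, r3)
  | _ => (r1,r2,negr r3) end.
Definition gen (k : nat) (x : t9) : t9 :=
  if (k < 5)%N then rgen k x else tr9 (rgen (k - 5) (tr9 x)).
Definition step (S : seq t9) : seq t9 :=
  undup (S ++ flatten [seq map (gen k) S | k <- iota 0 10]).
Definition m0x : t9 := ((1,2,2),(2,1,2),(2,2,3)).
Definition orbit := iter 6 step [:: m0x].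





Definition spm (s : 'S_3) (d : 'I_3 -> int) : 'M[int]_3 :=
  \matrix_(i, j) (d i * (s i == j)%:R).

Lemma spmE s d (M : 'M[int]_3) i j : (spm s d *m M) i j = d i * M (s i) j.
Proof.
rewrite mxE (bigD1 (s i)) //= big1 => [|k /negbTE nk]; last first.
  by rewrite mxE eq_sym nk mulr0 mul0r.
by rewrite mxE eqxx mulr1 addr0.
Qed.

Lemma signed_trmx (P : 'M[int]_3) : signed_perm_mx P -> signed_perm_mx P^T.
Proof.
case=> s [d [Hd ->]]; exists (s^-1)%g, (fun i => d ((s^-1)%g i)); split => //.
apply/matrixP => i j; rewrite !mxE.
have [<-|ne] := eqVneq ((s^-1)%g i) j; first by rewrite permKV eqxx.
case: eqP => [E|]; last by rewrite !mulr0.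
by case/eqP: ne; rewrite -E permK.
Qed.

Lemma signed_mul (P Q : 'M[int]_3) : signed_perm_mx P -> signed_perm_mx Q -> signed_perm_mx (P *m Q).
Proof.
case=> s [d [Hd ->]] [t [e [He ->]]].
exists (s * t)%g, (fun i => d i * e (s i)); split.
  by move=> i; case: (Hd i) => ->; case: (He (s i)) => ->; rewrite ?mulr1 ?mulrN1 ?opprK; auto.
apply/matrixP => i j; rewrite spmE !mxE permM; ring.
Qed.

Lemma signed1 : signed_perm_mx (1%:M : 'M[int]_3).
Proof.
exists 1%g, (fun=> 1); split; first by auto.
by apply/matrixP => i j; rewrite !mxE perm1 mul1r.
Qed.

Lemma equiv_step (Z P Q : 'M[int]_3) : mx_equiv M0 Z -> signed_perm_mx P -> signed_perm_mx Q ->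
  mx_equiv M0 (P *m Z *m Q).
Proof.
case=> P0 [Q0 [HP0 [HQ0 ->]]] HP HQ.
exists (P *m P0), (Q0 *m Q); split; first exact: signed_mul.
split; first exact: signed_mul.
by rewrite !mulmxA.
Qed.

Definition o0 : 'I_3 := @Ordinal 3 0 isT.
Definition o1 : 'I_3 := @Ordinal 3 1 isT.
Definition o2 : 'I_3 := @Ordinal 3 2 isT.

Lemma rgen_spm k y : exists2 P, signed_perm_mx P & mk (rgen k y) = P *m mk y.
Proof.
have sg s (d : 'I_3 -> int) : (forall i, d i = 1 \/ d i = -1) -> signed_perm_mx (spm s d).
  by move=> Hd; exists s, d.
case: y => [[[[a b] c] [[d e] f]] [[g h] i]].
case: k => [|[|[|[|k]]]].
- exists (spm (tperm o0 o1) (fun=> 1)); first by apply: sg; auto.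
  apply/matrixP => p q; rewrite spmE permE !mxE.
  by case: p => [[|[|[|//]]] ?]; case: q => [[|[|[|//]]] ?]; rewrite /= ?mul1r.
- exists (spm (tperm o1 o2) (fun=> 1)); first by apply: sg; auto.
  apply/matrixP => p q; rewrite spmE permE !mxE.
  by case: p => [[|[|[|//]]] ?]; case: q => [[|[|[|//]]] ?]; rewrite /= ?mul1r.
- exists (spm 1%g (fun p => if val p == 0%N then -1 else 1)).
    by apply: sg => p; case: ifP; auto.
  apply/matrixP => p q; rewrite spmE perm1 !mxE.
  by case: p => [[|[|[|//]]] ?]; case: q => [[|[|[|//]]] ?]; rewrite /= ?mul1r ?mulN1r.
- exists (spm 1%g (fun p => if val p == 1%N then -1 else 1)).
    by apply: sg => p; case: ifP; auto.
  apply/matrixP => p q; rewrite spmE perm1 !mxE.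
  by case: p => [[|[|[|//]]] ?]; case: q => [[|[|[|//]]] ?]; rewrite /= ?mul1r ?mulN1r.
- exists (spm 1%g (fun p => if val p == 2%N then -1 else 1)).
    by apply: sg => p; case: ifP; auto.
  apply/matrixP => p q; rewrite spmE perm1 !mxE.
  by case: p => [[|[|[|//]]] ?]; case: q => [[|[|[|//]]] ?]; rewrite /= ?mul1r ?mulN1r.
Qed.

Lemma mk_tr x : mk (tr9 x) = (mk x)^T.
Proof.
case: x => [[[[a b] c] [[d e] f]] [[g h] i]].
by apply/matrixP => p q; rewrite !mxE; case: p => [[|[|[|//]]] ?]; case: q => [[|[|[|//]]] ?].
Qed.

Lemma tr9K x : tr9 (tr9 x) = x.
Proof. by case: x => [[[[a b] c] [[d e] f]] [[g h] i]]. Qed.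

Lemma gen_equiv k y : mx_equiv M0 (mk y) -> mx_equiv M0 (mk (gen k y)).
Proof.
move=> H; rewrite /gen; case: ifP => _.
  have [P HP ->] := rgen_spm k y.
  by rewrite -[_ *m _]mulmx1; apply: equiv_step => //; apply: signed1.
have [P HP E] := rgen_spm (k - 5) (tr9 y).
rewrite mk_tr E trmx_mul mk_tr trmxK -[mk y]mul1mx.
by apply: equiv_step => //; [apply: signed1| apply: signed_trmx].
Qed.


Lemma rgenK k y : rgen k (rgen k y) = y.
Proof.
case: y => [[[[a b] c] [[d e] f]] [[g h] i]].
by case: k => [|[|[|[|k]]]] //=; rewrite !opprK.
Qed.

Lemma genK k y : gen k (gen k y) = y.
Proof.
rewrite /gen; case: (ltnP k 5) => _; first exact: rgenK.
by rewrite tr9K rgenK tr9K.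
Qed.

Lemma gen_equiv_back k y : mx_equiv M0 (mk (gen k y)) -> mx_equiv M0 (mk y).
Proof. by move=> H; rewrite -[y](genK k); apply: gen_equiv. Qed.

Definition a3 (v : int) : bool := absz v == 3%N.
Definition csteps : seq ((t9 -> bool) * nat) :=
  [:: (fun y => [|| a3 (ent y 0 0), a3 (ent y 0 1) | a3 (ent y 0 2)], 0%N);
      (fun y => [|| a3 (ent y 1 0), a3 (ent y 1 1) | a3 (ent y 1 2)], 1%N);
      (fun y => [|| a3 (ent y 0 0), a3 (ent y 1 0) | a3 (ent y 2 0)], 5%N);
      (fun y => [|| a3 (ent y 0 1), a3 (ent y 1 1) | a3 (ent y 2 1)], 6%N);
      (fun y => ent y 2 2 < 0, 4%N);
      (fun y => ent y 0 2 < 0, 2%N);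
      (fun y => ent y 1 2 < 0, 3%N);
      (fun y => ent y 2 0 < 0, 7%N);
      (fun y => ent y 2 1 < 0, 8%N);
      (fun y => absz (ent y 0 0) != 1%N, 0%N);
      (fun y => absz (ent y 0 0) != 1%N, 5%N)].

Definition canon_with (l : seq ((t9 -> bool) * nat)) (x : t9) : t9 :=
  foldl (fun y ck => if ck.1 y then gen ck.2 y else y) x l.
Definition canon := canon_with csteps.

Lemma canon_equiv l x : mx_equiv M0 (mk (canon_with l x)) -> mx_equiv M0 (mk x).
Proof.
elim: l x => [//|[c k] l IH] x /= /IH.
by case: ifP => // _; apply: gen_equiv_back.
Qed.

Definition big_check : bool :=
  let F := found in
  [&& all (fun x => ~~ okb 2 x) F, all (fun x => canon x == m0x) F, uniq F
    & size F == 576%N].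

Lemma big_check_ok : big_check.
Proof. vm_compute. reflexivity. Qed.


Lemma pcheckV v : pcheck 3 v -> v \in V.
Proof. by case: v => [[|[|[|[|n]]]]|[|[|[|n]]]]. Qed.

Lemma in_found x : okb 3 x -> x \in found.
Proof.
move=> Hx; rewrite /found mem_filter Hx /=.
move: Hx; case: x => [[[[a b] c] [[d e] f]] [[g h] i]].
move=> /and3P [_ /allP A /allP B].
have hV v : v \in [:: a; b; c; d; e; f; g; h; i] -> v \in V by move=> hv; apply: pcheckV; apply: A.
have R1 : (a, b, c) \in rows.
  by apply: allpairs_f; [apply: allpairs_f|]; apply: hV; rewrite !inE eqxx ?orbT.
have R2 : (d, e, f) \in rows.
  by apply: allpairs_f; [apply: allpairs_f|]; apply: hV; rewrite !inE eqxx ?orbT.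
have R3 : (g, h, i) \in rows.
  by apply: allpairs_f; [apply: allpairs_f|]; apply: hV; rewrite !inE eqxx ?orbT.
have C : cok (cross (a, b, c) (d, e, f)).
  apply/allP => v; rewrite !inE => /or3P [] /eqP ->; apply: B;
  by rewrite /adjx /tr9 /cross /= !inE eqxx ?orbT.
apply: allpairs_f => //.
apply/allpairsPdep; exists (a, b, c), (d, e, f); split => //.
by rewrite mem_filter C.
Qed.

Definition vals (M : 'M[int]_3) : t9 :=
  ((M o0 o0, M o0 o1, M o0 o2), (M o1 o0, M o1 o1, M o1 o2), (M o2 o0, M o2 o1, M o2 o2)).

Lemma mk_vals M : mk (vals M) = M.
Proof.
apply/matrixP => p q; rewrite mxE.
by case: p => [[|[|[|//]]] Hp]; case: q => [[|[|[|//]]] Hq]; congr (M _ _); apply: val_inj.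
Qed.

Lemma valsK : cancel mk vals.
Proof. by case=> [[[[a b] c] [[d e] f]] [[g h] i]]; rewrite /vals !mxE. Qed.

Lemma M0E : M0 = mk m0x.
Proof.
by apply/matrixP => p q; rewrite !mxE; case: p => [[|[|[|//]]] Hp]; case: q => [[|[|[|//]]] Hq].
Qed.

Lemma m0_ok : okb 3 m0x && ~~ okb 2 m0x.
Proof. by vm_compute. Qed.

Lemma okb23 x : okb 2 x -> okb 3 x.
Proof.
move/okP => [u [z p]]; apply/okP; split => //; split => //.
exact: leq_trans p _.
Qed.

Lemma found_ok x : x \in found -> okb 3 x.
Proof. by rewrite mem_filter => /andP []. Qed.

Lemma minimizer_iff M :
  unimodular M /\ zerofree M /\ pairnorm M = 3%N <-> okb 3 (vals M) && ~~ okb 2 (vals M).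
Proof.
rewrite -[M]mk_vals valsK; split.
  case=> u [z p]; apply/andP; split; first by apply/okP; rewrite p.
  by apply/negP => /okP [_ [_]]; rewrite p.
case/andP => /okP [u [z p]] /negP n; split => //; split => //.
apply/eqP; rewrite eqn_leq p /=; rewrite ltnNge; apply/negP => h; apply: n.
by apply/okP.
Qed.



Lemma bc_unf : big_check = [&& all (fun x => ~~ okb 2 x) found, all (fun x => canon x == m0x) found, uniq found
    & size found == 576%N].
Proof. reflexivity. Qed.
Lemma checks : [/\ {in found, forall x, ~~ okb 2 x}, {in found, forall x, canon x = m0x},
  uniq found & size found = 576%N].
Proof.
have H := big_check_ok.
rewrite bc_unf in H.
move: H => /and4P [C1 C2 U S].
split.
- move=> x hx. exact: (allP C1 x hx).
- move=> x hx. exact: (eqP (allP C2 x hx)).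
- exact: U.
- exact: (eqP S).
Qed.

Theorem mainTheorem8 :
  (* the minimum is 3 *)
  (forall M : 'M[int]_3, unimodular M -> zerofree M -> (3 <= pairnorm M)%N) /\
  (unimodular M0 /\ zerofree M0 /\ pairnorm M0 = 3%N) /\
  (* exactly 576 minimizers *)
  (exists s : seq 'M[int]_3,
      uniq s /\ size s = 576%N /\
      (forall M : 'M[int]_3,
          M \in s <-> (unimodular M /\ zerofree M /\ pairnorm M = 3%N))) /\
  (* all minimizers are equivalent to M0 *)
  (forall M : 'M[int]_3,
      unimodular M -> zerofree M -> pairnorm M = 3%N -> mx_equiv M0 M).
Proof.
have [C1 C2 U S] := checks.
split.
  move=> M u z; rewrite leqNgt; apply/negP => h.
  have H2 : okb 2 (vals M) by apply/okP; rewrite mk_vals; split; [exact: u| split; [exact: z| exact: h]].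
  exact: (elimT negP (C1 _ (in_found _ (okb23 _ H2))) H2).
split.
  apply/minimizer_iff; rewrite M0E valsK; exact: m0_ok.
split.
  exists (map mk found); split.
    rewrite (map_inj_uniq (can_inj valsK)); exact: U.
  split.
    rewrite size_map; exact: S.
  move=> M; rewrite minimizer_iff; split.
    case/mapP => x xf ->; rewrite valsK; apply/andP; split; [exact: found_ok | exact: C1].
  case/andP => /in_found xf _; rewrite -[M]mk_vals; exact: map_f.
move=> M u z p.
have MI : okb 3 (vals M) && ~~ okb 2 (vals M).
  apply/minimizer_iff; split; [exact: u | split; [exact: z | exact: p]].
have /andP [ok _] := MI.
have E := C2 _ (in_found _ ok).
rewrite -[M]mk_vals; apply: (canon_equiv csteps).
rewrite -/(canon _) E -M0E.
exists 1%:M, 1%:M; split; first exact: signed1.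
by split; [exact: signed1| rewrite mul1mx mulmx1].
Qed.
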